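(* Let $f$ be a $T$-norm with an additive generator $\mu$ such that for all $0\leq x\leq y\leq 1$ and all $h\geq 0$ with $y+h\leq 1$, $\mu(x)-\mu(x+h)\geq \mu(y)-\mu(y+h)$. Then $f$ satisfies property $A$.
   Context: A $T$-norm is a function $f:[0,1]^2\to[0,1]$ that is commutative, associative, monotonic ($x\leq y$ implies $f(x,z)\leq f(y,z)$) and satisfies $f(x,1)=x$. An additive generator of $f$ is a strictly decreasing function $\mu:[0,1]\to[0,\infty]$, right-continuous at $0$, with $\mu(1)=0$, such that for all $x,y\in[0,1]$, $\mu(x)+\mu(y)\in \mathrm{Range}(\mu)\cup[\mu(0),\infty]$ and $f(x,y)=\mu^{(-1)}(\mu(x)+\mu(y))$, where $\mu^{(-1)}:[0,\infty]\to[0,1]$ is the pseudo-inverse $\mu^{(-1)}(t)=\sup\{x\in[0,1]:\mu(x)>t\}$ (with $\sup\emptyset=0$). A function $f:[0,1]^2\to[0,1]$ satisfies property $A$ if for all $0\leq x\leq y\leq z\leq w\leq 1$, $w+x\leq y+z$ implies $f(x,w)\leq f(y,z)$. *)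

(* Defs.v *)
From Stdlib Require Import Reals.
From Coquelicot Require Import Coquelicot.
Open Scope R_scope.

Definition I01 (x : R) : Prop := 0 <= x <= 1.

(* A T-norm: a function on [0,1]^2 (represented as R -> R -> R, only its values
   on [0,1]^2 matter) with values in [0,1]. *)
Definition is_tnorm (f : R -> R -> R) : Prop :=
  (forall x y, I01 x -> I01 y -> I01 (f x y)) /\
  (forall x y, I01 x -> I01 y -> f x y = f y x) /\
  (forall x y z, I01 x -> I01 y -> I01 z -> f x (f y z) = f (f x y) z) /\
  (forall x y z, I01 x -> I01 y -> I01 z -> x <= y -> f x z <= f y z) /\
  (forall x, I01 x -> f x 1 = x).

(* Pseudo-inverse mu^(-1)(t) = sup {x in [0,1] | mu x > t}, with sup of the empty set = 0. *)
Definition pseudo_inv (mu : R -> Rbar) (t : Rbar) : R :=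
  match Lub_Rbar (fun x => I01 x /\ Rbar_lt t (mu x)) with
  | Finite r => r
  | _ => 0
  end.

Definition additive_generator (mu : R -> Rbar) (f : R -> R -> R) : Prop :=
  (forall x, I01 x -> Rbar_le (Finite 0) (mu x)) /\
  (forall x y, I01 x -> I01 y -> x < y -> Rbar_lt (mu y) (mu x)) /\
  filterlim mu (at_right 0) (Rbar_locally (mu 0)) /\
  mu 1 = Finite 0 /\
  (forall x y, I01 x -> I01 y ->
     (exists z, I01 z /\ mu z = Rbar_plus (mu x) (mu y)) \/
     Rbar_le (mu 0) (Rbar_plus (mu x) (mu y))) /\
  (forall x y, I01 x -> I01 y -> f x y = pseudo_inv mu (Rbar_plus (mu x) (mu y))).

Definition property_A (f : R -> R -> R) : Prop :=
  forall x y z w, 0 <= x -> x <= y -> y <= z -> z <= w -> w <= 1 ->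
    w + x <= y + z -> f x w <= f y z.

(* Main.v *)
Require Import Defs.
From Stdlib Require Import Reals Lra Classical.
From Coquelicot Require Import Coquelicot.
Open Scope R_scope.

Lemma lub_le1 (mu : R -> Rbar) t :
  Rbar_le (Lub_Rbar (fun x => I01 x /\ Rbar_lt t (mu x))) (Finite 1).
Proof.
  destruct (Lub_Rbar_correct (fun x => I01 x /\ Rbar_lt t (mu x))) as [_ Hl].
  apply Hl. intros u [[_ Hu] _]. simpl. exact Hu.
Qed.

Lemma lub_fin_ge0 (mu : R -> Rbar) t r :
  Lub_Rbar (fun x => I01 x /\ Rbar_lt t (mu x)) = Finite r -> 0 <= r.
Proof.
  intro E.
  destruct (Lub_Rbar_correct (fun x => I01 x /\ Rbar_lt t (mu x))) as [Hu Hl].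
  rewrite E in Hu, Hl.
  destruct (classic (exists u, I01 u /\ Rbar_lt t (mu u))) as [[u Hu'] | Hn].
  - specialize (Hu u Hu'). simpl in Hu. destruct Hu' as [[? _] _]. lra.
  - assert (Hb : Rbar_le (Finite r) (Finite (r - 1))).
    { apply Hl. intros u Hu'. exfalso. apply Hn. exists u. exact Hu'. }
    simpl in Hb. lra.
Qed.

Lemma pinv_anti (mu : R -> Rbar) t1 t2 :
  Rbar_le t1 t2 -> pseudo_inv mu t2 <= pseudo_inv mu t1.
Proof.
  intro Ht. unfold pseudo_inv.
  assert (Hs : Rbar_le (Lub_Rbar (fun x => I01 x /\ Rbar_lt t2 (mu x)))
                       (Lub_Rbar (fun x => I01 x /\ Rbar_lt t1 (mu x)))).
  { destruct (Lub_Rbar_correct (fun x => I01 x /\ Rbar_lt t2 (mu x))) as [_ Hl].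
    destruct (Lub_Rbar_correct (fun x => I01 x /\ Rbar_lt t1 (mu x))) as [Hu _].
    apply Hl. intros u [Hu1 Hu2]. apply Hu. split; auto.
    eapply Rbar_le_lt_trans; eauto. }
  pose proof (lub_le1 mu t1) as B1.
  pose proof (lub_fin_ge0 mu t1) as G1.
  destruct (Lub_Rbar (fun x => I01 x /\ Rbar_lt t2 (mu x))) as [r2| |];
  destruct (Lub_Rbar (fun x => I01 x /\ Rbar_lt t1 (mu x))) as [r1| |];
  simpl in *; try lra; try contradiction.
  specialize (G1 r1 eq_refl). lra.
Qed.

Theorem theorem5 (f : R -> R -> R) (mu : R -> Rbar) :
  is_tnorm f ->
  additive_generator mu f ->
  (forall x y h, 0 <= x -> x <= y -> y <= 1 -> 0 <= h -> y + h <= 1 ->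
     Rbar_le (Rbar_minus (mu y) (mu (y + h))) (Rbar_minus (mu x) (mu (x + h)))) ->
  property_A f.
Proof.
  intros _ [Hpos [Hdec [_ [_ [_ Hf]]]]] H x y z w H0x Hxy Hyz Hzw Hw1 Hs.
  assert (Mono : forall s t, I01 s -> I01 t -> s <= t -> Rbar_le (mu t) (mu s)).
  { intros s t Is It Hst. destruct (Rle_lt_or_eq_dec _ _ Hst) as [Hl|He].
    - apply Rbar_lt_le. apply Hdec; auto.
    - subst. apply Rbar_le_refl. }
  assert (Ix : I01 x) by (unfold I01; lra).
  assert (Iy : I01 y) by (unfold I01; lra).
  assert (Iz : I01 z) by (unfold I01; lra).
  assert (Iw : I01 w) by (unfold I01; lra).
  assert (Ie : I01 (x + (w - z))) by (unfold I01; lra).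
  rewrite (Hf x w Ix Iw), (Hf y z Iy Iz).
  apply pinv_anti.
  pose proof (H x z (w - z) H0x (Rle_trans _ _ _ Hxy Hyz) (Rle_trans _ _ _ Hzw Hw1)
                ltac:(lra) ltac:(lra)) as Hk.
  replace (z + (w - z)) with w in Hk by ring.
  pose proof (Mono x y Ix Iy Hxy) as Mxy.
  pose proof (Mono y z Iy Iz Hyz) as Myz.
  pose proof (Mono z w Iz Iw Hzw) as Mzw.
  pose proof (Mono x (x + (w - z)) Ix Ie ltac:(lra)) as Mxe.
  pose proof (Mono (x + (w - z)) y Ie Iy ltac:(lra)) as Mey.
  pose proof (Hpos w Iw) as Pw.
  pose proof (Hpos y Iy) as Py.
  pose proof (Hpos z Iz) as Pz.
  pose proof (Hpos x Ix) as Px.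
  pose proof (Hpos _ Ie) as Pe.
  destruct (mu x) as [a| |]; [| destruct (mu w); destruct (mu y); destruct (mu z); simpl in *; try contradiction; exact I | simpl in Px; contradiction].
  destruct (mu (x + (w - z))) as [e| |]; simpl in *; try contradiction.
  destruct (mu y) as [b| |]; simpl in *; try contradiction.
  destruct (mu z) as [c| |]; simpl in *; try contradiction.
  destruct (mu w) as [d| |]; simpl in *; try contradiction.
  lra.
Qed.
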